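(* Assume CH. Let $\mathcal{I}$ be a $\sigma$-ideal on $\mathbb{R}$ satisfying the standing assumptions. Then there exists a partition of $\mathbb{R}$ into $\mathfrak{c}$ many pairwise disjoint strong $\mathcal{I}$-Luzin sets.
   Context: Standing assumptions on $\mathcal{I}$: $\mathcal{I}$ is a $\sigma$-ideal of subsets of $\mathbb{R}$ such that $\mathbb{R}\notin\mathcal{I}$; $x+I\in\mathcal{I}$ and $xI\in\mathcal{I}$ for all $x\in\mathbb{R}$, $I\in\mathcal{I}$; every member of $\mathcal{I}$ is contained in a Borel member of $\mathcal{I}$; and for all Borel $A,B\notin\mathcal{I}$ the set $A-B$ has nonempty interior. A set $L\subseteq\mathbb{R}$ is $\mathcal{I}$-Luzin if $|L|=\mathfrak{c}$ and $L\cap I$ is countable for every $I\in\mathcal{I}$; it is strong $\mathcal{I}$-Luzin if moreover $L\cap B$ is uncountable for every Borel set $B\notin\mathcal{I}$. *)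

(* Defs.v *)
From Stdlib Require Import Reals.
Open Scope R_scope.

Definition subset_R (A B : R -> Prop) : Prop := forall x, A x -> B x.

Definition open_R (U : R -> Prop) : Prop :=
  forall x, U x -> exists eps, 0 < eps /\ forall y, Rabs (y - x) < eps -> U y.

Inductive Borel : (R -> Prop) -> Prop :=
| Borel_open : forall U, open_R U -> Borel U
| Borel_compl : forall A, Borel A -> Borel (fun x => ~ A x)
| Borel_union : forall A : nat -> R -> Prop,
    (forall n, Borel (A n)) -> Borel (fun x => exists n, A n x).

(* countable = finite or countably infinite (empty included) *)
Definition countable_R (A : R -> Prop) : Prop :=
  exists f : nat -> R, forall x, A x -> exists n, f n = x.

Definition card_continuum (A : R -> Prop) : Prop :=
  exists f : R -> R, (forall x, A (f x)) /\
    (forall x y, f x = f y -> x = y) /\ (forall y, A y -> exists x, f x = y).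

Definition CH : Prop :=
  forall A : R -> Prop, countable_R A \/ card_continuum A.

Definition sigma_ideal (I : (R -> Prop) -> Prop) : Prop :=
  I (fun _ => False) /\
  (forall A B, subset_R A B -> I B -> I A) /\
  (forall A : nat -> R -> Prop, (forall n, I (A n)) -> I (fun x => exists n, A n x)).

Definition standing_assumptions (I : (R -> Prop) -> Prop) : Prop :=
  sigma_ideal I /\
  ~ I (fun _ => True) /\
  (forall x A, I A -> I (fun y => exists a, A a /\ y = x + a)) /\
  (forall x A, I A -> I (fun y => exists a, A a /\ y = x * a)) /\
  (forall A, I A -> exists B, Borel B /\ I B /\ subset_R A B) /\
  (forall A B, Borel A -> Borel B -> ~ I A -> ~ I B ->
     exists x eps, 0 < eps /\
       forall y, Rabs (y - x) < eps -> exists a b, A a /\ B b /\ y = a - b).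

Definition I_Luzin (I : (R -> Prop) -> Prop) (L : R -> Prop) : Prop :=
  card_continuum L /\
  forall J, I J -> countable_R (fun x => L x /\ J x).

Definition strong_I_Luzin (I : (R -> Prop) -> Prop) (L : R -> Prop) : Prop :=
  I_Luzin I L /\
  forall B, Borel B -> ~ I B -> ~ countable_R (fun x => L x /\ B x).

(* Main.v *)
Require Import Defs.
From Stdlib Require Import Reals.
Open Scope R_scope.
From Stdlib Require Import Lra Lia Classical ClassicalEpsilon FunctionalExtensionality PropExtensionality.
From Stdlib Require Import Wellfounded.Inverse_Image.
From Stdlib Require Cantor.
From mathcomp Require wochoice boolp ssreflect ssrbool eqtype Rstruct.
Set Bullet Behavior "Strict Subproofs".
Open Scope R_scope.


Lemma inhR : inhabited R. Proof. exact (inhabits 0). Qed.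

Lemma cnt_sub (A B : R -> Prop) : (forall x, A x -> B x) -> countable_R B -> countable_R A.
Proof. intros H [f Hf]. exists f. intros x Ax. apply Hf, H, Ax. Qed.

Lemma cnt_range (f : nat -> R) : countable_R (fun x => exists k, f k = x).
Proof. exists f. intros x [k Hk]. exists k; exact Hk. Qed.

Lemma cnt_single (a : R) : countable_R (fun x => x = a).
Proof. exists (fun _ => a). intros x Hx. exists O. auto. Qed.

Lemma cnt_Union (A : nat -> R -> Prop) :
  (forall n, countable_R (A n)) -> countable_R (fun x => exists n, A n x).
Proof.
  intros H. destruct (choice (fun n (f : nat -> R) => forall x, A n x -> exists k, f k = x) H) as [F HF].
  exists (fun k => F (fst (Cantor.of_nat k)) (snd (Cantor.of_nat k))).
  intros x [n Hn]. destruct (HF n x Hn) as [m Hm].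
  exists (Cantor.to_nat (n, m)). rewrite Cantor.cancel_of_to. simpl. exact Hm.
Qed.

Lemma cnt_union2 (A B : R -> Prop) : countable_R A -> countable_R B ->
  countable_R (fun x => A x \/ B x).
Proof.
  intros HA HB.
  apply (cnt_sub _ (fun x => exists n, (match n with O => A | _ => B end) x)).
  - intros x [H|H]; [exists O | exists 1%nat]; exact H.
  - apply cnt_Union. intros [|n]; assumption.
Qed.

Lemma cnt_UnionR (S : R -> Prop) (A : R -> R -> Prop) : countable_R S ->
  (forall a, S a -> countable_R (A a)) -> countable_R (fun x => exists a, S a /\ A a x).
Proof.
  intros [f Hf] HA.
  apply (cnt_sub _ (fun x => exists n, (fun y => S (f n) /\ A (f n) y) x)).
  - intros x [a [Sa Ax]]. destruct (Hf a Sa) as [n Hn]. exists n. subst. auto.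
  - apply cnt_Union. intros n.
    destruct (classic (S (f n))) as [Hs|Hs].
    + apply (cnt_sub _ (A (f n))). { intros x [_ H]; exact H. } apply HA, Hs.
    + exists (fun _ => 0). intros x [H _]. contradiction.
Qed.

Lemma cnt_inj (S T : R -> Prop) (phi : R -> R) :
  (forall a b, S a -> S b -> phi a = phi b -> a = b) ->
  (forall a, S a -> T (phi a)) -> countable_R T -> countable_R S.
Proof.
  intros Hinj HST [f Hf].
  exists (fun k => epsilon inhR (fun a => S a /\ phi a = f k)).
  intros a Sa. destruct (Hf (phi a) (HST a Sa)) as [k Hk]. exists k.
  assert (E : exists a', S a' /\ phi a' = f k) by (exists a; auto).
  destruct (epsilon_spec inhR _ E) as [H1 H2].
  apply Hinj; auto. congruence.
Qed.


Definition icen (k : nat) : R :=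
  let nm := Cantor.of_nat k in
  let ab := Cantor.of_nat (snd nm) in
  (INR (fst ab) - INR (snd ab)) / (INR (fst nm) + 1).
Definition irad (k : nat) : R := 2 / (INR (fst (Cantor.of_nat k)) + 1).
Definition Ival (k : nat) (y : R) : Prop := Rabs (y - icen k) < irad k.

Lemma open_cover (U : R -> Prop) : open_R U -> forall x, U x ->
  exists k, Ival k x /\ forall y, Ival k y -> U y.
Proof.
  intros HU x Ux. destruct (HU x Ux) as [eps [Heps HB]].
  destruct (archimed_cor1 (eps/3)) as [N [HN HN0]]; [lra|].
  set (z := up (x * (INR N + 1))).
  destruct (archimed (x * (INR N + 1))) as [Hz1 Hz2]. fold z in Hz1, Hz2.
  set (a := Z.to_nat z). set (b := Z.to_nat (- z)).
  assert (Hab : IZR z = INR a - INR b).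
  { unfold a, b. rewrite !INR_IZR_INZ. rewrite <- minus_IZR. f_equal. lia. }
  exists (Cantor.to_nat (N, Cantor.to_nat (a, b))).
  assert (HN1 : 0 < INR N + 1) by (pose proof (pos_INR N); lra).
  assert (HNp : 0 < INR N) by (apply lt_0_INR; lia).
  unfold Ival, icen, irad. rewrite Cantor.cancel_of_to; cbn [fst snd]; rewrite Cantor.cancel_of_to; cbn [fst snd].
  rewrite <- Hab.
  assert (Hc : Rabs (x - IZR z / (INR N + 1)) <= 1 / (INR N + 1)).
  { replace (x - IZR z / (INR N + 1)) with ((x * (INR N + 1) - IZR z) / (INR N + 1)) by (field; lra).
    unfold Rdiv. rewrite Rabs_mult. rewrite (Rabs_inv (INR N + 1)). rewrite (Rabs_right (INR N + 1)) by lra.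
    apply Rmult_le_compat_r. { left; apply Rinv_0_lt_compat; lra. }
    rewrite Rabs_left1 by lra. lra. }
  assert (H13 : 1 / (INR N + 1) < 2 / (INR N + 1)).
  { unfold Rdiv. apply Rmult_lt_compat_r; [apply Rinv_0_lt_compat|]; lra. }
  split; [lra|].
  intros y Hy. apply HB.
  assert (H3 : 3 / (INR N + 1) < eps).
  { assert (/ (INR N + 1) < / INR N).
    { apply Rinv_lt_contravar; [nra|lra]. }
    lra. }
  assert (Hsplit : y - x = (y - IZR z / (INR N + 1)) + (IZR z / (INR N + 1) - x)) by ring.
  rewrite Hsplit. eapply Rle_lt_trans; [apply Rabs_triang|].
  rewrite Rabs_minus_sym with (x := IZR z / (INR N + 1)).
  assert (1 / (INR N + 1) + 2 / (INR N + 1) = 3 / (INR N + 1)) by (field; lra).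
  lra.
Qed.

Inductive code : Type :=
| Copen (s : nat -> bool) | Ccompl (c : code) | Cunion (f : nat -> code).

Fixpoint sem (c : code) : R -> Prop :=
  match c with
  | Copen s => fun x => exists k, s k = true /\ Ival k x
  | Ccompl c => fun x => ~ sem c x
  | Cunion f => fun x => exists n, sem (f n) x
  end.

Lemma borel_code (B : R -> Prop) : Borel B -> exists c, forall x, B x <-> sem c x.
Proof.
  induction 1 as [U HU | A HA IH | A HA IH].
  - exists (Copen (fun k => if excluded_middle_informative (forall y, Ival k y -> U y) then true else false)).
    intros x; simpl; split.
    + intros Ux. destruct (open_cover U HU x Ux) as [k [Hk1 Hk2]]. exists k.
      destruct (excluded_middle_informative _) as [H|H]; [auto|contradiction].
    + intros [k [Hk Hx]]. destruct (excluded_middle_informative _) as [H|H]; [auto|discriminate].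
  - destruct IH as [c Hc]. exists (Ccompl c). intros x; simpl. rewrite Hc. tauto.
  - destruct (choice (fun n c => forall x, A n x <-> sem c x) IH) as [f Hf].
    exists (Cunion f). intros x; simpl. split; intros [n Hn]; exists n; apply Hf; exact Hn.
Qed.

Fixpoint enc (c : code) : nat -> nat :=
  match c with
  | Copen s => fun k => match k with O => O | S k => if s k then 1%nat else O end
  | Ccompl c => fun k => match k with O => 1%nat | S k => enc c k end
  | Cunion f => fun k => match k with O => 2%nat
                 | S k => enc (f (fst (Cantor.of_nat k))) (snd (Cantor.of_nat k)) end
  end.

Lemma enc_inj (c c' : code) : enc c = enc c' -> c = c'.
Proof.
  revert c'. induction c as [s | c IH | f IH]; intros [s' | c' | f'] E;
    pose proof (f_equal (fun h => h O) E) as E0; simpl in E0; try discriminate.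
  - f_equal. apply functional_extensionality. intros k.
    pose proof (f_equal (fun h => h (S k)) E) as Ek. simpl in Ek.
    destruct (s k), (s' k); congruence.
  - f_equal. apply IH. apply functional_extensionality. intros k.
    exact (f_equal (fun h => h (S k)) E).
  - f_equal. apply functional_extensionality. intros i. apply IH.
    apply functional_extensionality. intros j.
    pose proof (f_equal (fun h => h (S (Cantor.to_nat (i, j)))) E) as Ek.
    cbv beta iota in Ek. cbn [enc] in Ek. rewrite Cantor.cancel_of_to in Ek. exact Ek.
Qed.

Definition gr (s : nat -> nat) (k : nat) : bool :=
  Nat.eqb (s (fst (Cantor.of_nat k))) (snd (Cantor.of_nat k)).

Lemma gr_inj (s s' : nat -> nat) : gr s = gr s' -> s = s'.
Proof.
  intros E. apply functional_extensionality. intros i.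
  pose proof (f_equal (fun h => h (Cantor.to_nat (i, s i))) E) as Ek. cbv beta in Ek.
  unfold gr in Ek. rewrite Cantor.cancel_of_to in Ek. cbn [fst snd] in Ek.
  rewrite Nat.eqb_refl in Ek. symmetry in Ek. apply Nat.eqb_eq in Ek. auto.
Qed.


Definition wt (s : nat -> bool) (k : nat) : R := if s k then / 3 ^ (S k) else 0.
Fixpoint ps (s : nat -> bool) (m : nat) : R :=
  match m with O => 0 | S m => ps s m + wt s m end.

Lemma pow3_pos k : 0 < 3 ^ k. Proof. apply pow_lt; lra. Qed.

Lemma wt_bounds s k : 0 <= wt s k <= / 3 ^ (S k).
Proof.
  unfold wt. pose proof (pow3_pos (S k)). pose proof (Rinv_0_lt_compat _ H).
  destruct (s k); lra.
Qed.

Lemma ps_tail s n d : 0 <= ps s (n + d) - ps s n <= (/ 3 ^ n - / 3 ^ (n + d)) / 2.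
Proof.
  induction d as [|d IH].
  - rewrite Nat.add_0_r. lra.
  - rewrite Nat.add_succ_r. simpl ps. pose proof (wt_bounds s (n + d)).
    assert (E : / 3 ^ S (n + d) = / 3 ^ (n + d) / 3).
    { simpl. field. pose proof (pow3_pos (n+d)); lra. }
    rewrite E in H. rewrite E. lra.
Qed.

Lemma ps_bound s m : 0 <= ps s m <= 1.
Proof.
  pose proof (ps_tail s O m). simpl in H. pose proof (pow3_pos m).
  assert (0 < / 3 ^ m) by (apply Rinv_0_lt_compat; lra). lra.
Qed.

Lemma ps_mono s m m' : (m <= m')%nat -> ps s m <= ps s m'.
Proof.
  intros H. replace m' with (m + (m' - m))%nat by lia. pose proof (ps_tail s m (m' - m)). lra.
Qed.

Definition psE (s : nat -> bool) (y : R) : Prop := exists m, y = ps s m.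

Lemma psE_bound s : bound (psE s).
Proof. exists 1. intros y [m ->]. apply ps_bound. Qed.
Lemma psE_ne s : exists y, psE s y.
Proof. exists 0. exists O. reflexivity. Qed.

Definition val (s : nat -> bool) : R := proj1_sig (completeness (psE s) (psE_bound s) (psE_ne s)).

Lemma val_lub s : is_lub (psE s) (val s).
Proof. unfold val. destruct (completeness _ _ _) as [v Hv]. exact Hv. Qed.

Lemma ps_agree s s' n : (forall k, (k < n)%nat -> s k = s' k) -> forall m, (m <= n)%nat -> ps s m = ps s' m.
Proof.
  intros H m. induction m as [|m IH]; intros Hm; simpl; [reflexivity|].
  rewrite IH by lia. unfold wt. rewrite H by lia. reflexivity.
Qed.

Lemma val_sep s s' n : (forall k, (k < n)%nat -> s k = s' k) -> s n = true -> s' n = false ->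
  val s' < val s.
Proof.
  intros Hag Hs Hs'.
  set (C := ps s n).
  assert (HC : ps s' n = C) by (symmetry; apply (ps_agree s s' n Hag); lia).
  assert (H1 : ps s (S n) = C + / 3 ^ S n) by (simpl; unfold wt; rewrite Hs; reflexivity).
  assert (H2 : ps s' (S n) = C) by (simpl; unfold wt; rewrite Hs'; rewrite HC; ring).
  assert (Hp : 0 < / 3 ^ S n) by (apply Rinv_0_lt_compat, pow3_pos).
  destruct (val_lub s) as [Hub _]. destruct (val_lub s') as [_ Hlub].
  assert (A1 : C + / 3 ^ S n <= val s) by (rewrite <- H1; apply Hub; exists (S n); reflexivity).
  assert (A2 : val s' <= C + / 3 ^ S n / 2).
  { apply Hlub. intros y [m ->].
    destruct (Compare_dec.le_lt_dec m n) as [Hm|Hm].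
    - pose proof (ps_mono s' m n Hm). lra.
    - replace m with (S n + (m - S n))%nat by lia.
      pose proof (ps_tail s' (S n) (m - S n)).
      assert (0 < / 3 ^ (S n + (m - S n))) by (apply Rinv_0_lt_compat, pow3_pos). lra. }
  lra.
Qed.

Lemma least_diff (s s' : nat -> bool) : s <> s' ->
  exists n, s n <> s' n /\ forall k, (k < n)%nat -> s k = s' k.
Proof.
  intros Hne.
  assert (Ex : exists n, s n <> s' n).
  { apply NNPP. intros Hn. apply Hne. apply functional_extensionality. intros k.
    apply NNPP. intros Hk. apply Hn. exists k. exact Hk. }
  destruct Ex as [n Hn].
  induction n as [n IHn] using (well_founded_induction Wf_nat.lt_wf).
  destruct (classic (exists k, (k < n)%nat /\ s k <> s' k)) as [[k [Hk1 Hk2]]|Hno].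
  - exact (IHn k Hk1 Hk2).
  - exists n. split; [exact Hn|]. intros k Hk. apply NNPP. intros Hk'. apply Hno. eauto.
Qed.

Lemma val_inj s s' : val s = val s' -> s = s'.
Proof.
  intros E. apply NNPP. intros Hne.
  destruct (least_diff s s' Hne) as [n [Hn Hag]].
  destruct (s n) eqn:Hs, (s' n) eqn:Hs'; try congruence.
  - pose proof (val_sep s s' n Hag Hs Hs'). lra.
  - assert (Hag' : forall k, (k < n)%nat -> s' k = s k) by (intros; symmetry; auto).
    pose proof (val_sep s' s n Hag' Hs' Hs). lra.
Qed.

Lemma inh_code : inhabited code. Proof. exact (inhabits (Copen (fun _ => false))). Qed.

Definition benum (r : R) : R -> Prop :=
  sem (epsilon inh_code (fun c => val (gr (enc c)) = r)).

Lemma benum_spec (B : R -> Prop) : Borel B -> exists r, forall x, B x <-> benum r x.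
Proof.
  intros HB. destruct (borel_code B HB) as [c Hc].
  exists (val (gr (enc c))).
  assert (E : exists c', val (gr (enc c')) = val (gr (enc c))) by (exists c; reflexivity).
  pose proof (epsilon_spec inh_code _ E) as Hs.
  apply val_inj, gr_inj, enc_inj in Hs.
  unfold benum. rewrite Hs. exact Hc.
Qed.


Module WOmod.
Import ssreflect ssrbool eqtype Rstruct.

Lemma wo_exists : exists le : R -> R -> Prop,
  (forall P : R -> Prop, (exists x, P x) -> exists z, P z /\ forall x, P x -> le z x) /\
  (forall a b, le a b -> le b a -> a = b).
Proof.
  have [r Hr] : {r : R -> R -> bool | wochoice.well_order r} := wochoice.well_ordering_principle _.
  exists (fun a b => r a b = true). split.
  - move=> P [x Px].
    have Hne : wochoice.nonempty (fun y => boolp.asbool (P y)).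
      by exists x; rewrite unfold_in; apply/boolp.asboolP.
    have [z [[Hz1 Hz2] _]] := Hr _ Hne.
    exists z; split.
    + by move: Hz1; rewrite unfold_in => /boolp.asboolP.
    + move=> y Py. apply: Hz2. by rewrite unfold_in; apply/boolp.asboolP.
  - move=> a b Hab Hba.
    have Hne : wochoice.nonempty (fun y => boolp.asbool (y = a \/ y = b)).
      by exists a; rewrite unfold_in; apply/boolp.asboolP; left.
    have [z [_ Hu]] := Hr _ Hne.
    have Haa : r a a.
      have Hne1 : wochoice.nonempty (fun y => boolp.asbool (y = a)).
        by exists a; rewrite unfold_in; apply/boolp.asboolP.
      have [z1 [[Hz1 Hz2] _]] := Hr _ Hne1.
      move: Hz1; rewrite unfold_in => /boolp.asboolP Ez; subst z1.
      apply: Hz2. by rewrite unfold_in; apply/boolp.asboolP.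
    have Hbb : r b b.
      have Hne1 : wochoice.nonempty (fun y => boolp.asbool (y = b)).
        by exists b; rewrite unfold_in; apply/boolp.asboolP.
      have [z1 [[Hz1 Hz2] _]] := Hr _ Hne1.
      move: Hz1; rewrite unfold_in => /boolp.asboolP Ez; subst z1.
      apply: Hz2. by rewrite unfold_in; apply/boolp.asboolP.
    have Ma : wochoice.minimum_of r (fun y => boolp.asbool (y = a \/ y = b)) a.
      split; first by rewrite unfold_in; apply/boolp.asboolP; left.
      move=> y; rewrite unfold_in => /boolp.asboolP [->|->] //.
    have Mb : wochoice.minimum_of r (fun y => boolp.asbool (y = a \/ y = b)) b.
      split; first by rewrite unfold_in; apply/boolp.asboolP; right.
      move=> y; rewrite unfold_in => /boolp.asboolP [->|->] //.
    by rewrite -(Hu _ Ma) -(Hu _ Mb).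
Qed.
End WOmod.


Definition omega1_order (lt : R -> R -> Prop) : Prop :=
  well_founded lt /\ (forall a b, lt a b \/ a = b \/ lt b a) /\
  (forall a b c, lt a b -> lt b c -> lt a c) /\
  (forall a, countable_R (fun b => lt b a)).

Lemma omega1_exists : CH -> ~ countable_R (fun _ => True) -> exists lt, omega1_order lt.
Proof.
  intros HCH Hunc.
  destruct WOmod.wo_exists as [le0 [HM Has]].
  assert (Hrefl : forall a, le0 a a).
  { intros a. destruct (HM (fun y => y = a)) as [z [Hz H]]; [eauto|]. subst z. apply H. reflexivity. }
  assert (Htot : forall a b, le0 a b \/ le0 b a).
  { intros a b. destruct (HM (fun y => y = a \/ y = b)) as [z [[Hz|Hz] H]]; [eauto| |]; subst z.
    - left. apply H. auto.
    - right. apply H. auto. }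
  assert (Htr : forall a b c, le0 a b -> le0 b c -> le0 a c).
  { intros a b c Hab Hbc.
    destruct (HM (fun y => y = a \/ y = b \/ y = c)) as [z [[Hz|[Hz|Hz]] H]]; [eauto| | |]; subst z.
    - apply H. auto.
    - assert (a = b) by (apply Has; auto; apply H; auto). subst. auto.
    - assert (b = c) by (apply Has; auto; apply H; auto). subst. auto. }
  set (lt0 := fun a b => le0 a b /\ a <> b).
  assert (Hwf : well_founded lt0).
  { intros x. apply NNPP. intros Hx.
    destruct (HM (fun y => ~ Acc lt0 y)) as [z [Hz H]]; [exists x; exact Hx|].
    apply Hz. constructor. intros y [Hyz Hne]. apply NNPP. intros Hy.
    apply Hne. apply Has; auto. }
  assert (Htri : forall a b, lt0 a b \/ a = b \/ lt0 b a).
  { intros a b. destruct (classic (a = b)) as [E|E]; [auto|].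
    destruct (Htot a b); [left|right;right]; split; auto. }
  assert (Htr0 : forall a b c, lt0 a b -> lt0 b c -> lt0 a c).
  { intros a b c [H1 H2] [H3 H4]. split; [eauto|]. intros E; subst c.
    apply H2. apply Has; auto. }
  destruct (classic (forall a, countable_R (fun b => lt0 b a))) as [Hall|Hbad].
  - exists lt0. split; [exact Hwf|split; [exact Htri|split; [exact Htr0|exact Hall]]].
  - destruct (HM (fun a => ~ countable_R (fun b => lt0 b a))) as [p [Hp Hpmin]].
    { apply NNPP. intros H. apply Hbad. intros a. apply NNPP. intros H'. apply H. eauto. }
    destruct (HCH (fun b => lt0 b p)) as [Hc|[phi [HS [Hinj Hsurj]]]]; [contradiction|].
    exists (fun a b => lt0 (phi a) (phi b)). split; [|split; [|split]].
    + apply wf_inverse_image. exact Hwf.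
    + intros a b. destruct (Htri (phi a) (phi b)) as [H|[H|H]]; auto.
    + intros a b c. apply Htr0.
    + intros b. apply (cnt_inj _ (fun c => lt0 c (phi b)) phi).
      * intros x y _ _. apply Hinj.
      * intros a H; exact H.
      * apply NNPP. intros Hb. specialize (Hpmin _ Hb).
        destruct (HS b) as [H1 H2]. apply H2. apply Has; auto.
Qed.


Lemma I_facts (I : (R -> Prop) -> Prop) : standing_assumptions I ->
  (forall A, countable_R A -> I A) /\ ~ countable_R (fun _ => True).
Proof.
  intros [[H0 [Hsub HU]] [HT [Htr [_ [_ Hint]]]]].
  assert (Hz : I (fun x => ~ x <> 0)).
  { apply NNPP. intros Hn.
    assert (Hb : Borel (fun x => ~ x <> 0)).
    { apply Borel_compl. apply Borel_open. intros x Hx. exists (Rabs x).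
      split; [apply Rabs_pos_lt; exact Hx|]. intros y Hy E. subst y.
      rewrite Rminus_0_l, Rabs_Ropp in Hy. lra. }
    destruct (Hint _ _ Hb Hb Hn Hn) as [x [eps [Heps H]]].
    destruct (H x) as [a [b [Ha [Hb' E1]]]]; [rewrite Rminus_diag, Rabs_R0; lra|].
    destruct (H (x + eps/2)) as [a' [b' [Ha' [Hb'' E2]]]].
    { replace (x + eps/2 - x) with (eps/2) by ring. rewrite Rabs_right; lra. }
    apply NNPP in Ha, Hb', Ha', Hb''. subst. lra. }
  assert (Hs : forall a, I (fun x => x = a)).
  { intros a. apply (Hsub _ (fun y => exists b, (fun x => ~ x <> 0) b /\ y = a + b)).
    - intros y Hy. exists 0. split; [intros C; apply C; reflexivity|]. rewrite Hy; ring.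
    - apply Htr. exact Hz. }
  assert (Hc : forall A, countable_R A -> I A).
  { intros A [f Hf]. apply (Hsub _ (fun x => exists n, (fun y => y = f n) x)).
    - intros x Ax. destruct (Hf x Ax) as [n Hn]. exists n. auto.
    - apply HU. intros n. apply Hs. }
  split; [exact Hc|]. intros C. apply HT. apply Hc. exact C.
Qed.

Lemma I_union_nat (I : (R -> Prop) -> Prop) : standing_assumptions I ->
  forall A B, I A -> I B -> I (fun x => A x \/ B x).
Proof.
  intros [[H0 [Hsub HU]] _] A B HA HB.
  apply (Hsub _ (fun x => exists n, (match n with O => A | _ => B end) x)).
  - intros x [H|H]; [exists O|exists 1%nat]; exact H.
  - apply HU. intros [|n]; assumption.
Qed.

Lemma I_UnionR (I : (R -> Prop) -> Prop) : standing_assumptions I ->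
  forall (S : R -> Prop) (A : R -> R -> Prop), countable_R S ->
  (forall a, S a -> I (A a)) -> I (fun x => exists a, S a /\ A a x).
Proof.
  intros [[H0 [Hsub HU]] _] S A [f Hf] HA.
  apply (Hsub _ (fun x => exists n, (fun y => S (f n) /\ A (f n) y) x)).
  - intros x [a [Sa Ax]]. destruct (Hf a Sa) as [n Hn]. exists n. subst. auto.
  - apply HU. intros n.
    destruct (classic (S (f n))) as [Hs|Hs].
    + apply (Hsub _ (A (f n))). { intros x [_ H]; exact H. } apply HA, Hs.
    + apply (Hsub _ (fun _ => False)); [|exact H0]. intros x [H _]. contradiction.
Qed.

Section Construction.
Variable I : (R -> Prop) -> Prop.
Hypothesis HI : standing_assumptions I.
Hypothesis HCH : CH.
Variable lt : R -> R -> Prop.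
Hypothesis Hord : omega1_order lt.
Variable e : R -> R -> Prop.
Hypothesis He : forall B, Borel B -> exists r, forall x, B x <-> e r x.

Definition le (a b : R) : Prop := lt a b \/ a = b.

Lemma lt_tri a b : lt a b \/ a = b \/ lt b a.
Proof. destruct Hord as [_ [H _]]. apply H. Qed.
Lemma lt_trans a b c : lt a b -> lt b c -> lt a c.
Proof. destruct Hord as [_ [_ [H _]]]. apply H. Qed.
Lemma lt_wf' : well_founded lt.
Proof. destruct Hord as [H _]. exact H. Qed.
Lemma lt_seg a : countable_R (fun b => lt b a).
Proof. destruct Hord as [_ [_ [_ H]]]. apply H. Qed.
Lemma lt_irrefl a : ~ lt a a.
Proof. intros H. induction a as [a IH] using (well_founded_induction lt_wf'). eapply IH; eauto. Qed.
Lemma le_trans a b c : le a b -> le b c -> le a c.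
Proof. unfold le. intros [H1|H1] [H2|H2]; subst; eauto using lt_trans. Qed.
Lemma lt_le_trans a b c : lt a b -> le b c -> lt a c.
Proof. unfold le. intros H1 [H2|H2]; subst; eauto using lt_trans. Qed.

Lemma le_seg a : countable_R (fun b => le b a).
Proof. apply cnt_union2; [apply lt_seg | apply cnt_single]. Qed.

Definition slt (s s' : R * nat) : Prop :=
  lt (fst s) (fst s') \/ (fst s = fst s' /\ (snd s < snd s')%nat).

Lemma slt_wf : well_founded slt.
Proof.
  intros [a n]. revert n.
  induction a as [a IHa] using (well_founded_induction lt_wf').
  intros n. induction n as [n IHn] using (well_founded_induction Wf_nat.lt_wf).
  constructor. intros [b m] [H|[H1 H2]]; simpl in *.
  - apply IHa. exact H.
  - subst b. apply IHn. exact H2.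
Qed.

Lemma slt_tri s s' : slt s s' \/ s = s' \/ slt s' s.
Proof.
  destruct s as [a n], s' as [b m]. unfold slt; simpl.
  destruct (lt_tri a b) as [H|[H|H]]; auto.
  subst b. destruct (Compare_dec.lt_eq_lt_dec n m) as [[H|H]|H]; subst; auto.
Qed.

Lemma min_exists (Q : R * nat -> Prop) s0 : Q s0 ->
  exists s, Q s /\ forall s', slt s' s -> ~ Q s'.
Proof.
  induction s0 as [s0 IH] using (well_founded_induction slt_wf). intros Hq.
  destruct (classic (exists s', slt s' s0 /\ Q s')) as [[s' [H1 H2]]|Hno].
  - exact (IH s' H1 H2).
  - exists s0. split; [exact Hq|]. intros s' H1 H2. apply Hno. eauto.
Qed.

Lemma inh_seq : inhabited (nat -> R). Proof. exact (inhabits (fun _ => 0)). Qed.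

Definition hh (a : R) : nat -> R :=
  epsilon inh_seq (fun f => forall t, le t a -> exists i, f i = t).

Lemma hh_spec a t : le t a -> exists i, hh a i = t.
Proof.
  revert t. unfold hh. apply epsilon_spec.
  destruct (le_seg a) as [f Hf]. exists f. exact Hf.
Qed.

Definition g (a : R) (k : nat) : R * R :=
  (hh a (fst (Cantor.of_nat k)), hh a (snd (Cantor.of_nat k))).

Lemma g_surj a t b : le t a -> le b a -> exists n, g a n = (t, b).
Proof.
  intros Ht Hb. destruct (hh_spec a t Ht) as [i Hi]. destruct (hh_spec a b Hb) as [j Hj].
  exists (Cantor.to_nat (i, j)). unfold g. rewrite Cantor.cancel_of_to. cbn [fst snd]. congruence.
Qed.

Definition avoidI (a p : R) : Prop := exists c, le c a /\ I (e c) /\ e c p.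

Definition good (s : R * nat) (n : nat) (prev : R -> Prop) (p : R) : Prop :=
  e (snd (g (fst s) n)) p /\ ~ avoidI (fst s) p /\ ~ prev p.

Definition choose_pt (s : R * nat) (n : nat) (prev : R -> Prop) : R :=
  epsilon inhR (fun p => good s n prev p \/ (~ (exists q, good s n prev q) /\ p = fst s)).

Lemma choose_pt_spec s n prev :
  good s n prev (choose_pt s n prev) \/
  (~ (exists q, good s n prev q) /\ choose_pt s n prev = fst s).
Proof.
  unfold choose_pt. apply epsilon_spec.
  destruct (classic (exists q, good s n prev q)) as [[q Hq]|Hno].
  - exists q. left. exact Hq.
  - exists (fst s). right. auto.
Qed.

Definition F (s : R * nat) (rec : forall s', slt s' s -> R) : R :=
  match snd s with
  | O => fst s
  | S n => choose_pt s n (fun p => exists s' (H : slt s' s), rec s' H = p)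
  end.

Definition point : R * nat -> R := Fix slt_wf (fun _ => R) F.

Lemma point_eq s : point s = F s (fun s' _ => point s').
Proof.
  unfold point. apply (Fix_eq slt_wf (fun _ => R) F).
  intros x f f' Hff. unfold F. destruct (snd x) as [|n]; [reflexivity|].
  f_equal. apply functional_extensionality. intros p. apply propositional_extensionality.
  split; intros [s' [H E]]; exists s', H; rewrite <- E; [symmetry|]; apply Hff.
Qed.

Definition prevS (s : R * nat) (p : R) : Prop := exists s', slt s' s /\ point s' = p.

Lemma point_0 a : point (a, O) = a.
Proof. rewrite point_eq. reflexivity. Qed.

Lemma point_S a n :
  good (a, S n) n (prevS (a, S n)) (point (a, S n)) \/
  (~ (exists q, good (a, S n) n (prevS (a, S n)) q) /\ point (a, S n) = a).
Proof.
  assert (E : point (a, S n) = choose_pt (a, S n) n (prevS (a, S n))).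
  { rewrite point_eq. unfold F. cbn [snd]. f_equal.
    apply functional_extensionality. intros p. apply propositional_extensionality.
    unfold prevS. split.
    - intros [s' [H E]]. exists s'. auto.
    - intros [s' [H E]]. exists s', H. exact E. }
  rewrite E. apply choose_pt_spec.
Qed.

Lemma prevS_I s : I (prevS s).
Proof.
  destruct (I_facts I HI) as [Hc _]. apply Hc.
  apply (cnt_sub _ (fun x => exists a, le a (fst s) /\ (fun a y => exists k, point (a, k) = y) a x)).
  - intros x [[b m] [H E]]. exists b. split; [|exists m; exact E].
    destruct H as [H|[H _]]; [left|right]; auto.
  - apply cnt_UnionR; [apply le_seg|]. intros a _. apply (cnt_range (fun k => point (a, k))).
Qed.

Lemma avoidI_I a : I (avoidI a).
Proof.
  unfold avoidI.
  apply (I_UnionR I HI (fun c => le c a) (fun c p => I (e c) /\ e c p)); [apply le_seg|].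
  intros c _. destruct HI as [[H0 [Hsub _]] _].
  destruct (classic (I (e c))) as [Hc|Hc].
  - apply (Hsub _ (e c)); [intros x [_ H]; exact H | exact Hc].
  - apply (Hsub _ (fun _ => False)); [intros x [H _]; contradiction | exact H0].
Qed.

Lemma good_exists a n : ~ I (e (snd (g a n))) ->
  exists q, good (a, S n) n (prevS (a, S n)) q.
Proof.
  intros HnI. apply NNPP. intros Hno. apply HnI.
  destruct HI as [[H0 [Hsub _]] _].
  apply (Hsub _ (fun x => avoidI a x \/ prevS (a, S n) x)).
  - intros x Hx. apply NNPP. intros Hx'. apply Hno. exists x.
    unfold good; cbn [fst]. repeat split; auto.
  - apply (I_union_nat I HI); [apply avoidI_I | apply prevS_I].
Qed.

Definition tgt (s : R * nat) : R :=
  match snd s with O => fst s | S n => fst (g (fst s) n) end.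

Definition Piece (t x : R) : Prop :=
  exists s, point s = x /\ tgt s = t /\ forall s', slt s' s -> point s' <> x.

Lemma Piece_cover x : exists t, Piece t x.
Proof.
  destruct (min_exists (fun s => point s = x) (x, O) (point_0 x)) as [s [H1 H2]].
  exists (tgt s), s. split; [exact H1|]. split; [reflexivity|]. exact H2.
Qed.

Lemma Piece_disj i j x : i <> j -> Piece i x -> Piece j x -> False.
Proof.
  intros Hij [s1 [E1 [T1 M1]]] [s2 [E2 [T2 M2]]].
  destruct (slt_tri s1 s2) as [H|[H|H]].
  - exact (M2 s1 H E1).
  - subst s2. apply Hij. congruence.
  - exact (M1 s2 H E2).
Qed.

Lemma Piece_unc t B : Borel B -> ~ I B -> ~ countable_R (fun x => Piece t x /\ B x).
Proof.
  intros HB HnB Hcnt.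
  destruct (I_facts I HI) as [_ Hunc].
  destruct (He B HB) as [b Hb].
  assert (HnI : ~ I (e b)).
  { intros H. apply HnB. destruct HI as [[_ [Hsub _]] _]. apply (Hsub _ (e b)); [|exact H].
    intros x Hx; apply Hb, Hx. }
  assert (Hm : exists m, le t m /\ le b m).
  { destruct (lt_tri t b) as [H|[H|H]].
    - exists b. split; [left; exact H | right; reflexivity].
    - subst. exists b. split; right; reflexivity.
    - exists t. split; [right; reflexivity | left; exact H]. }
  destruct Hm as [m [Htm Hbm]].
  set (na := fun a => epsilon (inhabits O) (fun n => g a n = (t, b))).
  assert (Hna : forall a, le m a -> g a (na a) = (t, b)).
  { intros a Ha. unfold na. apply epsilon_spec. apply g_surj; eapply le_trans; eauto. }
  set (phi := fun a => point (a, S (na a))).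
  assert (Hgood : forall a, le m a -> good (a, S (na a)) (na a) (prevS (a, S (na a))) (phi a)).
  { intros a Ha. destruct (point_S a (na a)) as [H|[H _]]; [exact H|].
    exfalso. apply H. apply good_exists. rewrite (Hna a Ha). exact HnI. }
  apply Hunc.
  apply (cnt_sub _ (fun a => lt a m \/ le m a)).
  { intros a _. destruct (lt_tri a m) as [H|[H|H]]; [left|right;right|right;left]; auto. }
  apply cnt_union2; [apply lt_seg|].
  apply (cnt_inj (fun a => le m a) (fun x => Piece t x /\ B x) phi); [ | | exact Hcnt].
  - intros a1 a2 H1 H2 E.
    destruct (lt_tri a1 a2) as [H|[H|H]]; [exfalso| exact H | exfalso].
    + destruct (Hgood a2 H2) as [_ [_ Hp]]. apply Hp.
      exists (a1, S (na a1)). split; [left; exact H | exact E].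
    + destruct (Hgood a1 H1) as [_ [_ Hp]]. apply Hp.
      exists (a2, S (na a2)). split; [left; exact H | symmetry; exact E].
  - intros a Ha. destruct (Hgood a Ha) as [Hb' [_ Hp]]. split.
    + exists (a, S (na a)). split; [reflexivity|]. split.
      * unfold tgt. cbn [snd fst]. rewrite (Hna a Ha). reflexivity.
      * intros s' Hs' E. apply Hp. exists s'. auto.
    + apply Hb. cbn [fst] in Hb'. rewrite (Hna a Ha) in Hb'. exact Hb'.
Qed.

Lemma Piece_cntI t J : I J -> countable_R (fun x => Piece t x /\ J x).
Proof.
  intros HJ. destruct HI as [_ [_ [_ [_ [Hhull _]]]]].
  destruct (Hhull J HJ) as [B [HB [HIB HJB]]].
  destruct (He B HB) as [c Hc].
  assert (HIc : I (e c)).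
  { destruct HI as [[_ [Hsub _]] _]. apply (Hsub _ B); [|exact HIB]. intros x Hx; apply Hc, Hx. }
  apply (cnt_sub _ (fun x => x = t \/ exists a, lt a c /\ (fun a y => exists k, point (a, k) = y) a x)).
  - intros x [[[a k] [Hps [Ht Hmin]]] Jx].
    destruct (lt_tri a c) as [H|H].
    + right. exists a. split; [exact H | exists k; exact Hps].
    + assert (Hca : le c a) by (destruct H as [H|H]; [right; symmetry; exact H | left; exact H]).
      destruct k as [|n].
      * left. rewrite point_0 in Hps. unfold tgt in Ht. cbn in Ht. congruence.
      * exfalso. destruct (point_S a n) as [Hg|[_ Hp]].
        -- destruct Hg as [_ [Hav _]]. apply Hav. cbn [fst]. exists c. split; [exact Hca|].
           split; [exact HIc|]. rewrite Hps. apply Hc, HJB, Jx.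
        -- apply (Hmin (a, O)); [right; cbn; split; [reflexivity | lia]|].
           rewrite point_0. congruence.
  - apply cnt_union2; [apply cnt_single|].
    apply cnt_UnionR; [apply lt_seg|]. intros a _. apply (cnt_range (fun k => point (a, k))).
Qed.

Lemma Piece_strong t : strong_I_Luzin I (Piece t).
Proof.
  destruct (I_facts I HI) as [_ Hunc].
  assert (Hu : ~ countable_R (fun x => Piece t x /\ True)).
  { apply Piece_unc.
    - apply Borel_open. intros x _. exists 1. split; [lra|]. auto.
    - destruct HI as [_ [HT _]]. exact HT. }
  split; [split|].
  - destruct (HCH (Piece t)) as [Hc|Hc]; [|exact Hc].
    exfalso. apply Hu. apply (cnt_sub _ (Piece t)); [intros x [H _]; exact H | exact Hc].
  - apply Piece_cntI.
  - apply Piece_unc.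
Qed.

End Construction.


Theorem mainTheorem3 (HCH : CH) (I : (R -> Prop) -> Prop)
  (HI : standing_assumptions I) :
  exists P : R -> (R -> Prop),
    (forall i, strong_I_Luzin I (P i)) /\
    (forall i j x, i <> j -> P i x -> P j x -> False) /\
    (forall x, exists i, P i x).
Proof.
  destruct (I_facts I HI) as [_ Hunc].
  destruct (omega1_exists HCH Hunc) as [lt Hord].
  exists (Piece I lt Hord benum).
  split; [|split].
  - intros i. apply Piece_strong; auto. apply benum_spec.
  - intros i j x. apply (Piece_disj I lt Hord benum).
  - intros x. apply (Piece_cover I lt Hord benum).
Qed.
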